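(* Let $k$ be a field of characteristic zero, $a\in k[h]$ a non-constant polynomial, $h_0\in k\setminus\{0\}$, $\sigma\in\mathrm{Aut}_k(k[h])$ given by $\sigma(h)=h-h_0$, and $A=A(k[h],a,\sigma)$ the generalized Weyl algebra. Let $r\geq 1$ and let $w\in k$ be a primitive $r$-th root of unity, and let $G=\mathbb{Z}/r\mathbb{Z}$ act on $A$ by powers of the automorphism $\theta_w$ of $A$ determined by $\theta_w(x)=wx$, $\theta_w(y)=w^{-1}y$, $\theta_w(h)=h$. Then the subalgebra of invariants $A^G$ is isomorphic to the generalized Weyl algebra $A(k[H],\tilde a,\tau)$, where $\tau\in\mathrm{Aut}_k(k[H])$ is given by $\tau(H)=H-h_0$ and \[\tilde a(H)=\sigma^{-r+1}(a)(rH)\cdots\sigma^{-1}(a)(rH)\,a(rH),\] i.e. $\tilde a(H)=\prod_{i=0}^{r-1}(\sigma^{-i}(a))(rH)$, where $(\sigma^{-i}(a))(rH)$ denotes the polynomial $\sigma^{-i}(a)\in k[h]$ evaluated at $h=rH$. (Under the isomorphism, $H$ corresponds to $h/r$, and the generators $X,Y$ of the generalized Weyl algebra correspond to $x^r,y^r$.)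
   Context: For a $k$-algebra $R$, a central element $a\in R$ and $\sigma\in\mathrm{Aut}_k(R)$, the generalized Weyl algebra $A(R,a,\sigma)$ is the $k$-algebra generated by $R$ and two new variables $x,y$ subject to the relations $yx=a$, $xy=\sigma(a)$, $xr=\sigma(r)x$ and $ry=y\sigma(r)$ for all $r\in R$. *)

(* Defs.v *)
From HB Require Import structures.
From mathcomp Require Import all_boot all_order all_algebra.
Set Implicit Arguments. Unset Strict Implicit. Unset Printing Implicit Defensive.
Import Order.TTheory GRing.Theory Num.Theory.
Local Open Scope ring_scope.

Definition is_kalg_hom (k : fieldType) (A C : algType k) (f : A -> C) : Prop :=
  [/\ forall u v, f (u + v) = f u + f v,
      forall (c : k) u, f (c *: u) = c *: f u,
      forall u v, f (u * v) = f u * f v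
    & f 1 = 1].

Definition gwa_rel (k : fieldType) (R : algType k) (a : R) (s : R -> R)
  (C : algType k) (f : R -> C) (x y : C) : Prop :=
  [/\ is_kalg_hom f,
      y * x = f a,
      x * y = f (s a),
      forall r, x * f r = f (s r) * x
    & forall r, f r * y = y * f (s r)].

(* (A, iota, x, y) is THE generalized Weyl algebra A(R,a,s): the k-algebra
   generated by R and x, y subject to the relations above, characterized
   (up to unique isomorphism) by its universal property. *)
Definition is_GWA (k : fieldType) (R : algType k) (a : R) (s : R -> R)
  (A : algType k) (iota : R -> A) (x y : A) : Prop :=
  gwa_rel a s iota x y /\
  forall (C : algType k) (f : R -> C) (x' y' : C),
    gwa_rel a s f x' y' ->
    (exists g : A -> C,
        [/\ is_kalg_hom g, forall r, g (iota r) = f r, g x = x' & g y = y'])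
    /\ (forall g1 g2 : A -> C,
          is_kalg_hom g1 -> (forall r, g1 (iota r) = f r) -> g1 x = x' -> g1 y = y' ->
          is_kalg_hom g2 -> (forall r, g2 (iota r) = f r) -> g2 x = x' -> g2 y = y' ->
          g1 =1 g2).

Definition shift_sigma (k : fieldType) (h0 : k) (p : {poly k}) : {poly k} :=
  p \Po ('X - h0%:P).

Definition shift_sigma_inv (k : fieldType) (h0 : k) (p : {poly k}) : {poly k} :=
  p \Po ('X + h0%:P).

Definition a_tilde (k : fieldType) (h0 : k) (r : nat) (a : {poly k}) : {poly k} :=
  \prod_(i < r) ((iter i (shift_sigma_inv h0) a) \Po (r%:R *: 'X)).

(* Main.v *)
Require Import Defs.
From HB Require Import structures.
From mathcomp Require Import all_boot all_order all_algebra.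
From mathcomp Require Import zify.
From Stdlib Require Import FunctionalExtensionality ProofIrrelevance ClassicalEpsilon.
Set Implicit Arguments. Unset Strict Implicit. Unset Printing Implicit Defensive.
Import Order.TTheory GRing.Theory Num.Theory.
Local Open Scope ring_scope.

Section Hom.
Variables (k : fieldType) (A C : algType k) (f : A -> C).
Hypothesis hf : is_kalg_hom f.

Lemma homD u v : f (u + v) = f u + f v. Proof. by case: hf. Qed.
Lemma homZ c u : f (c *: u) = c *: f u. Proof. by case: hf. Qed.
Lemma homM u v : f (u * v) = f u * f v. Proof. by case: hf. Qed.
Lemma hom1 : f 1 = 1. Proof. by case: hf. Qed.
Lemma hom0 : f 0 = 0.
Proof. by rewrite -(scale0r (0 : A)) homZ scale0r. Qed.
Lemma homN u : f (- u) = - f u.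
Proof. by rewrite -scaleN1r homZ scaleN1r. Qed.
Lemma homB u v : f (u - v) = f u - f v.
Proof. by rewrite homD homN. Qed.
Lemma homX u n : f (u ^+ n) = f u ^+ n.
Proof. elim: n => [|n IH]; first by rewrite !expr0 hom1. by rewrite !exprS homM IH. Qed.
Lemma hom_sum (I : Type) (s : seq I) (F : I -> A) :
  f (\sum_(i <- s) F i) = \sum_(i <- s) f (F i).
Proof.
elim: s => [|i s IH]; first by rewrite !big_nil hom0.
by rewrite !big_cons homD IH.
Qed.
End Hom.

Lemma hom_comp (k : fieldType) (A B C : algType k) (f : A -> B) (g : B -> C) :
  is_kalg_hom f -> is_kalg_hom g -> is_kalg_hom (g \o f).
Proof.
move=> hf hg; split => /= [u v|c u|u v|]; by rewrite ?(homD hf, homD hg, homZ hf, homZ hg, homM hf, homM hg, hom1 hf, hom1 hg).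
Qed.

Lemma hom_id (k : fieldType) (A : algType k) : is_kalg_hom (@id A).
Proof. by []. Qed.

Section Sig.
Variables (k : fieldType) (h0 : k).
Local Notation sig := (shift_sigma h0).
Local Notation sigi := (shift_sigma_inv h0).

Lemma sigiK p : sigi (sig p) = p.
Proof.
rewrite /shift_sigma /shift_sigma_inv -comp_polyA comp_polyB comp_polyX comp_polyC.
by rewrite addrK comp_polyXr.
Qed.
Lemma sigKi p : sig (sigi p) = p.
Proof. exact: comp_polyXaddC_K. Qed.
Lemma sigD p q : sig (p + q) = sig p + sig q. Proof. exact: comp_polyD. Qed.
Lemma sigZ c p : sig (c *: p) = c *: sig p. Proof. exact: comp_polyZ. Qed.
Lemma sigM p q : sig (p * q) = sig p * sig q. Proof. exact: comp_polyM. Qed.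
Lemma sigC c : sig c%:P = c%:P. Proof. exact: comp_polyC. Qed.
Lemma sig1 : sig 1 = 1. Proof. exact: (sigC 1). Qed.
Lemma sig0 : sig 0 = 0. Proof. exact: comp_poly0. Qed.
Lemma sigiD p q : sigi (p + q) = sigi p + sigi q. Proof. exact: comp_polyD. Qed.
Lemma sigiZ c p : sigi (c *: p) = c *: sigi p. Proof. exact: comp_polyZ. Qed.
Lemma sigiM p q : sigi (p * q) = sigi p * sigi q. Proof. exact: comp_polyM. Qed.
Lemma sigiC c : sigi c%:P = c%:P. Proof. exact: comp_polyC. Qed.
Lemma sigi0 : sigi 0 = 0. Proof. exact: comp_poly0. Qed.
Lemma sigi_eq0 p : (sigi p == 0) = (p == 0).
Proof. apply: comp_poly2_eq0; by rewrite size_XaddC. Qed.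
End Sig.

Section Model.
Variable k : fieldType.
Definition Vm := int -> {poly k}.
Definition vlin (c : k) (u v : Vm) : Vm := fun n => c *: u n + v n.
Record op := Op { app : Vm -> Vm; app_lin : forall c u v, app (vlin c u v) = vlin c (app u) (app v) }.

Lemma op_ext (f g : op) : (forall u n, app f u n = app g u n) -> f = g.
Proof.
case: f g => [f fl] [g gl] /= H.
have E : f = g by apply: functional_extensionality => u; apply: functional_extensionality => n.
subst g; congr Op; exact: proof_irrelevance.
Qed.

Definition op_eqb (f g : op) : bool := if excluded_middle_informative (f = g) then true else false.
Lemma op_eqP : Equality.axiom op_eqb.
Proof. move=> f g; rewrite /op_eqb; case: excluded_middle_informative => H; by constructor. Qed.
HB.instance Definition _ := hasDecEq.Build op op_eqP.

Definition op_find (P : pred op) (n : nat) : option op :=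
  match excluded_middle_informative (exists x, P x) with
  | left H => Some (proj1_sig (constructive_indefinite_description _ H))
  | right _ => None end.
Lemma op_find_correct P n x : op_find P n = Some x -> P x.
Proof.
rewrite /op_find; case: excluded_middle_informative => // H [<-].
exact: proj2_sig (constructive_indefinite_description _ H).
Qed.
Lemma op_find_complete (P : pred op) : (exists x, P x) -> exists n, op_find P n.
Proof. move=> H; exists 0%N; rewrite /op_find; by case: excluded_middle_informative. Qed.
Lemma op_find_ext (P Q : pred op) : P =1 Q -> op_find P =1 op_find Q.
Proof. move=> H n; have -> : P = Q by apply: functional_extensionality. by []. Qed.
HB.instance Definition _ := hasChoice.Build op op_find_correct op_find_complete op_find_ext.

Lemma vlinE c u v n : vlin c u v n = c *: u n + v n. Proof. by []. Qed.

Definition op0 : op.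
refine (@Op (fun _ _ => 0) _). move=> c u v; apply: functional_extensionality => n.
by rewrite vlinE scaler0 addr0.
Defined.
Definition opadd (f g : op) : op.
refine (@Op (fun u n => app f u n + app g u n) _). move=> c u v; apply: functional_extensionality => n.
by rewrite !app_lin !vlinE scalerDr addrACA.
Defined.
Definition opopp (f : op) : op.
refine (@Op (fun u n => - app f u n) _). move=> c u v; apply: functional_extensionality => n.
by rewrite !app_lin !vlinE opprD scalerN.
Defined.
Definition op1 : op.
refine (@Op (fun u => u) _). by [].
Defined.
Definition opmul (f g : op) : op.
refine (@Op (fun u => app f (app g u)) _). by move=> c u v; rewrite !app_lin.
Defined.
Definition opscale (a : k) (f : op) : op.
refine (@Op (fun u n => a *: app f u n) _). move=> c u v; apply: functional_extensionality => n.
by rewrite !app_lin !vlinE scalerDr !scalerA mulrC.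
Defined.

Lemma opaddA : associative opadd.
Proof. by move=> f g h; apply: op_ext => u n /=; rewrite addrA. Qed.
Lemma opaddC : commutative opadd.
Proof. by move=> f g; apply: op_ext => u n /=; rewrite addrC. Qed.
Lemma opadd0 : left_id op0 opadd.
Proof. by move=> f; apply: op_ext => u n /=; rewrite add0r. Qed.
Lemma opaddN : left_inverse op0 opopp opadd.
Proof. by move=> f; apply: op_ext => u n /=; rewrite addNr. Qed.
HB.instance Definition _ := GRing.isZmodule.Build op opaddA opaddC opadd0 opaddN.

Lemma app_additive (f : op) u v : app f (fun n => u n + v n) = fun n => app f u n + app f v n.
Proof.
have E : (fun n => u n + v n) = vlin 1 u v.
  by apply: functional_extensionality => n; rewrite vlinE scale1r.
rewrite E app_lin; apply: functional_extensionality => n; by rewrite vlinE scale1r.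
Qed.
Lemma app_zero (f : op) : app f (fun _ => 0) = fun _ => 0.
Proof.
have E : (fun _ : int => 0 : {poly k}) = (fun n => (fun _ : int => 0 : {poly k}) n + (fun _ : int => 0) n).
  by apply: functional_extensionality => n; rewrite addr0.
apply: functional_extensionality => n.
have H := congr1 (fun g => g n) (app_additive f (fun _ => 0) (fun _ => 0)).
rewrite /= -E in H. by move: H; rewrite -{1}[app f _ n]addr0 => /addrI.
Qed.
Lemma app_scale (f : op) c u : app f (fun n => c *: u n) = fun n => c *: app f u n.
Proof.
have E : (fun n => c *: u n) = vlin c u (fun _ => 0).
  by apply: functional_extensionality => n; rewrite vlinE addr0.
rewrite E app_lin app_zero; apply: functional_extensionality => n; by rewrite vlinE addr0.
Qed.

Lemma opmulA : associative opmul. Proof. by move=> f g h; apply: op_ext. Qed.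
Lemma opmul1 : left_id op1 opmul. Proof. by move=> f; apply: op_ext. Qed.
Lemma opmulr1 : right_id op1 opmul. Proof. by move=> f; apply: op_ext. Qed.
Lemma opmulDl : left_distributive opmul +%R. Proof. by move=> f g h; apply: op_ext. Qed.
Lemma opmulDr : right_distributive opmul +%R.
Proof. by move=> f g h; apply: op_ext => u n /=; rewrite app_additive. Qed.
Lemma op1_neq0 : op1 != 0.
Proof.
apply/eqP => /(congr1 (fun f => app f (fun _ => 1) 0)) /= /eqP.
by rewrite oner_eq0.
Qed.
HB.instance Definition _ := GRing.Zmodule_isNzRing.Build op opmulA opmul1 opmulr1 opmulDl opmulDr op1_neq0.

Lemma opscaleA a b v : opscale a (opscale b v) = opscale (a * b) v.
Proof. by apply: op_ext => u n /=; rewrite scalerA. Qed.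
Lemma opscale1 : left_id 1 opscale.
Proof. by move=> f; apply: op_ext => u n /=; rewrite scale1r. Qed.
Lemma opscaleDr : right_distributive opscale +%R.
Proof. by move=> a f g; apply: op_ext => u n /=; rewrite scalerDr. Qed.
Lemma opscaleDl v : {morph opscale^~ v: a b / a + b}.
Proof. by move=> a b; apply: op_ext => u n /=; rewrite scalerDl. Qed.
HB.instance Definition _ := GRing.Zmodule_isLmodule.Build k op opscaleA opscale1 opscaleDr opscaleDl.
Lemma opscaleAl (a : k) (f g : op) : a *: (f * g) = (a *: f) * g.
Proof. by apply: op_ext. Qed.
HB.instance Definition _ := GRing.Lmodule_isLalgebra.Build k op opscaleAl.
Lemma opscaleAr (a : k) (f g : op) : a *: (f * g) = f * (a *: g).
Proof. by apply: op_ext => u n /=; rewrite app_scale. Qed.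
HB.instance Definition _ := GRing.Lalgebra_isAlgebra.Build k op opscaleAr.

Lemma appD (f g : op) u n : app (f + g) u n = app f u n + app g u n. Proof. by []. Qed.
Lemma appM (f g : op) u : app (f * g) u = app f (app g u). Proof. by []. Qed.
Lemma app0 u n : app (0 : op) u n = 0. Proof. by []. Qed.
Lemma app_sum (I : Type) (s : seq I) (F : I -> op) u n :
  app (\sum_(i <- s) F i) u n = \sum_(i <- s) app (F i) u n.
Proof. elim: s => [|i s IH]; by rewrite ?big_nil ?big_cons // appD IH. Qed.

End Model.

Section Rep.
Variables (k : fieldType) (h0 : k) (a : {poly k}).
Local Notation sig := (shift_sigma h0).
Local Notation sigi := (shift_sigma_inv h0).

Definition Pp (p : {poly k}) : op k.
refine (@Op k (fun u n => p * u n) _). move=> c u v; apply: functional_extensionality => n.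
by rewrite !vlinE mulrDr scalerAr.
Defined.
Definition Xo : op k.
refine (@Op k (fun u n => sig (u (n - 1))) _). move=> c u v; apply: functional_extensionality => n.
by rewrite !vlinE sigD sigZ.
Defined.
Definition Yo : op k.
refine (@Op k (fun u n => a * sigi (u (n + 1))) _). move=> c u v; apply: functional_extensionality => n.
by rewrite !vlinE sigiD sigiZ mulrDr scalerAr.
Defined.

Lemma model_rel : gwa_rel a sig Pp Xo Yo.
Proof.
split.
- split.
  + by move=> p q; apply: op_ext => u n /=; rewrite mulrDl.
  + by move=> c p; apply: op_ext => u n /=; rewrite -scalerAl.
  + by move=> p q; apply: op_ext => u n /=; rewrite mulrA.
  + by apply: op_ext => u n /=; rewrite mul1r.
- by apply: op_ext => u n /=; rewrite sigiK addrK.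
- by apply: op_ext => u n /=; rewrite sigM sigKi subrK.
- by move=> p; apply: op_ext => u n /=; rewrite sigM.
- by move=> p; apply: op_ext => u n /=; rewrite sigiM sigiK mulrCA.
Qed.

Definition v0 : Vm k := fun n => if n == 0 then 1 else 0.

Lemma Xo_pow m : app (Xo ^+ m) v0 = fun n => if n == m%:Z then 1 else 0.
Proof.
elim: m => [|m IH]; first by rewrite expr0.
rewrite exprS appM IH; apply: functional_extensionality => n /=.
rewrite subr_eq -addn1 PoszD.
by case: ifP => _; rewrite ?sig1 ?sig0.
Qed.

Fixpoint cY (m : nat) : {poly k} := if m is m'.+1 then a * sigi (cY m') else 1.

Lemma Yo_pow m : app (Yo ^+ m) v0 = fun n => if n == - m%:Z then cY m else 0.
Proof.
elim: m => [|m IH]; first by rewrite expr0 /v0; apply: functional_extensionality => n; rewrite oppr0.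
rewrite exprS appM IH; apply: functional_extensionality => n /=.
have -> : (n + 1 == - m%:Z) = (n == - (m.+1)%:Z).
  rewrite -addn1 PoszD opprD; apply/eqP/eqP => [H|->]; [by rewrite -H addrK | by rewrite subrK].
by case: ifP => _; rewrite ?sigi0 ?mulr0.
Qed.

Lemma cY_neq0 m : a != 0 -> cY m != 0.
Proof.
move=> a0; elim: m => [|m IH] /=; first exact: oner_neq0.
by rewrite mulf_neq0 // sigi_eq0.
Qed.

End Rep.

Section GenAll.
Variables (k : fieldType) (R : algType k) (a : R) (s : R -> R).
Variables (A : algType k) (iota : R -> A) (x y : A).
Hypothesis HA : is_GWA a s iota x y.
Variable P : A -> Prop.
Hypotheses (P1 : P 1) (PD : forall u v, P u -> P v -> P (u + v))
  (PM : forall u v, P u -> P v -> P (u * v)) (PZ : forall c u, P u -> P (c *: u))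
  (Pi : forall r, P (iota r)) (Px : P x) (Py : P y).

Definition pb : pred A := fun z => if excluded_middle_informative (P z) then true else false.
Lemma pbP z : pb z <-> P z.
Proof. rewrite /pb; case: excluded_middle_informative => H; split => //. Qed.

Lemma pb_closed : GRing.subsemialg_closed pb.
Proof.
split.
- by rewrite unfold_in; apply/pbP.
- split; first by rewrite unfold_in; apply/pbP; rewrite -(scale0r (1 : A)); apply: PZ.
  by move=> u v; rewrite !unfold_in => /pbP Hu /pbP Hv; apply/pbP; apply: PD.
- by move=> c u; rewrite !unfold_in => /pbP Hu; apply/pbP; apply: PZ.
- by move=> u v; rewrite !unfold_in => /pbP Hu /pbP Hv; apply/pbP; apply: PM.
Qed.

Record W := MkW { wval :> A; wP : pb wval }.
HB.instance Definition _ := [isSub for wval].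
HB.instance Definition _ := [Choice of W by <:].
HB.instance Definition _ := GRing.SubChoice_isSubAlgebra.Build k A pb W pb_closed.

Lemma gen_all z : P z.
Proof.
have ip r : pb (iota r) by apply/pbP.
have xp : pb x by apply/pbP.
have yp : pb y by apply/pbP.
pose f r : W := MkW (ip r).
pose x' : W := MkW xp.
pose y' : W := MkW yp.
have valhom : is_kalg_hom (wval : W -> A).
  split => [u v|c u|u v|] /=; by [].
have [[ihom yx xy xr ry] U] := HA.
have Hrel : gwa_rel a s f x' y'.
  split.
  - split => [u v|c u|u v|]; apply: val_inj => /=.
    + exact: homD ihom u v.
    + exact: homZ ihom c u.
    + exact: homM ihom u v.
    + exact: hom1 ihom.
  - by apply: val_inj => /=.
  - by apply: val_inj => /=.
  - by move=> r; apply: val_inj => /=.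
  - by move=> r; apply: val_inj => /=.
have [[g [gh gi gx gy]] _] := U _ f x' y' Hrel.
have [_ U2] := U A iota x y (And5 ihom yx xy xr ry).
have E := U2 (wval \o g) id (hom_comp gh valhom) (fun r => congr1 wval (gi r))
  (congr1 wval gx) (congr1 wval gy) (@hom_id _ A) (fun r => erefl) erefl erefl z.
rewrite /= in E; rewrite -E; apply/pbP; exact: wP.
Qed.
End GenAll.

Section GWA.
Variables (k : fieldType) (h0 : k) (a : {poly k}).
Local Notation sig := (shift_sigma h0).
Local Notation sigi := (shift_sigma_inv h0).
Variables (A : algType k) (iota : {poly k} -> A) (x y : A).
Hypothesis Hrel : gwa_rel a sig iota x y.

Lemma ihom : is_kalg_hom iota. Proof. by case: Hrel. Qed.
Lemma yx_rel : y * x = iota a. Proof. by case: Hrel. Qed.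
Lemma xy_rel : x * y = iota (sig a). Proof. by case: Hrel. Qed.
Lemma xr_rel p : x * iota p = iota (sig p) * x. Proof. by case: Hrel. Qed.
Lemma ry_rel p : iota p * y = y * iota (sig p). Proof. by case: Hrel. Qed.
Lemma yr_rel p : y * iota p = iota (sigi p) * y.
Proof. by rewrite ry_rel sigKi. Qed.
Lemma rx_rel p : iota p * x = x * iota (sigi p).
Proof. by rewrite xr_rel sigKi. Qed.

Lemma xnr_rel n p : x ^+ n * iota p = iota (iter n sig p) * x ^+ n.
Proof.
elim: n p => [|n IH] p; first by rewrite expr0 mul1r mulr1.
by rewrite exprSr -mulrA xr_rel mulrA IH iterSr -mulrA.
Qed.
Lemma rynr_rel n p : iota p * y ^+ n = y ^+ n * iota (iter n sig p).
Proof.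
elim: n p => [|n IH] p; first by rewrite expr0 mul1r mulr1.
by rewrite exprS mulrA ry_rel -mulrA IH iterSr mulrA.
Qed.

Lemma ynxn n : y ^+ n * x ^+ n = iota (\prod_(i < n) iter i sigi a).
Proof.
elim: n => [|n IH]; first by rewrite !expr0 mulr1 big_ord0 (hom1 ihom).
rewrite exprSr exprS mulrA -(mulrA _ y) -mulrA.
Abort.

Inductive Sp : A -> Prop :=
| Sp0 : Sp 0
| SpX z p n : Sp z -> Sp (z + iota p * x ^+ n)
| SpY z p n : Sp z -> Sp (z + iota p * y ^+ n).

Lemma SpD u v : Sp u -> Sp v -> Sp (u + v).
Proof.
move=> Hu; elim => [|z p n _ IH|z p n _ IH]; first by rewrite addr0.
- by rewrite addrA; apply: SpX.
- by rewrite addrA; apply: SpY.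
Qed.
Lemma SpXm p n : Sp (iota p * x ^+ n).
Proof. by rewrite -[_ * _]add0r; apply: SpX; apply: Sp0. Qed.
Lemma SpYm p n : Sp (iota p * y ^+ n).
Proof. by rewrite -[_ * _]add0r; apply: SpY; apply: Sp0. Qed.

Lemma SpZ c u : Sp u -> Sp (c *: u).
Proof.
elim => [|z p n _ IH|z p n _ IH]; first by rewrite scaler0; apply: Sp0.
- by rewrite scalerDr scalerAl -(homZ ihom); apply: SpX.
- by rewrite scalerDr scalerAl -(homZ ihom); apply: SpY.
Qed.

Lemma Sp_iota q u : Sp u -> Sp (iota q * u).
Proof.
elim => [|z p n _ IH|z p n _ IH]; first by rewrite mulr0; apply: Sp0.
- by rewrite mulrDr mulrA -(homM ihom); apply: SpX.
- by rewrite mulrDr mulrA -(homM ihom); apply: SpY.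
Qed.

Lemma Sp_x u : Sp u -> Sp (x * u).
Proof.
elim => [|z p n _ IH|z p n _ IH]; first by rewrite mulr0; apply: Sp0.
- by rewrite mulrDr mulrA xr_rel -mulrA -exprS; apply: SpX.
- rewrite mulrDr mulrA xr_rel; apply: SpD => //.
  case: n => [|n]; first by rewrite expr0 mulr1 -(expr1 x); apply: SpXm.
  by rewrite exprS -mulrA (mulrA x) xy_rel mulrA -(homM ihom); apply: SpYm.
Qed.

Lemma Sp_y u : Sp u -> Sp (y * u).
Proof.
elim => [|z p n _ IH|z p n _ IH]; first by rewrite mulr0; apply: Sp0.
- rewrite mulrDr mulrA yr_rel; apply: SpD => //.
  case: n => [|n]; first by rewrite expr0 mulr1 -(expr1 y); apply: SpYm.
  by rewrite exprS -mulrA (mulrA y) yx_rel mulrA -(homM ihom); apply: SpXm.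
- by rewrite mulrDr mulrA yr_rel -mulrA -exprS; apply: SpY.
Qed.

End GWA.

Definition Tpred (k : fieldType) (A : algType k) (iota : {poly k} -> A) (x y : A) (z : A) :=
  forall u, Sp iota x y u -> Sp iota x y (z * u).

Lemma span_all (k : fieldType) (h0 : k) (a : {poly k}) (A : algType k)
  (iota : {poly k} -> A) (x y : A) (HA : is_GWA a (shift_sigma h0) iota x y) z :
  Sp iota x y z.
Proof.
have Hrel := HA.1.
have hT1 : Tpred iota x y 1 by move=> u Hu; rewrite mul1r.
have hTD : forall u v, Tpred iota x y u -> Tpred iota x y v -> Tpred iota x y (u + v).
  by move=> u v Hu Hv w Hw; rewrite mulrDl; apply: SpD; [apply: Hu|apply: Hv].
have hTM : forall u v, Tpred iota x y u -> Tpred iota x y v -> Tpred iota x y (u * v).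
  by move=> u v Hu Hv w Hw; rewrite -mulrA; apply: Hu; apply: Hv.
have hTZ : forall c u, Tpred iota x y u -> Tpred iota x y (c *: u).
  by move=> c u Hu w Hw; rewrite -scalerAl; apply: SpZ; [exact: Hrel|apply: Hu].
have hTi : forall r, Tpred iota x y (iota r) by move=> r w Hw; apply: (Sp_iota Hrel).
have hTx : Tpred iota x y x by move=> w Hw; apply: (Sp_x Hrel).
have hTy : Tpred iota x y y by move=> w Hw; apply: (Sp_y Hrel).
have Tall := gen_all HA hT1 hTD hTM hTZ hTi hTx hTy.
rewrite -[z]mulr1; apply: Tall.
rewrite -(hom1 (ihom Hrel)) -[iota 1]mulr1 -(expr0 x); apply: SpXm.
Qed.

Section PolyFacts.
Variables (k : fieldType) (h0 : k).
Local Notation sig := (shift_sigma h0).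
Local Notation sigi := (shift_sigma_inv h0).

Lemma sig_prod n (F : 'I_n -> {poly k}) : sig (\prod_(i < n) F i) = \prod_(i < n) sig (F i).
Proof. apply: (big_morph sig (@sigM _ h0) (@sig1 _ h0)). Qed.

Lemma comp_prod (q : {poly k}) n (F : 'I_n -> {poly k}) :
  (\prod_(i < n) F i) \Po q = \prod_(i < n) (F i \Po q).
Proof.
apply: (big_morph (fun p => p \Po q)); first by move=> u v; rewrite comp_polyM.
by rewrite -polyC1 comp_polyC.
Qed.

Lemma iter_sig n q : iter n sig q = q \Po ('X - (n%:R * h0)%:P).
Proof.
elim: n => [|n IH]; first by rewrite mul0r subr0 comp_polyXr.
rewrite iterS IH /shift_sigma -comp_polyA comp_polyB comp_polyX comp_polyC.
by rewrite -addn1 natrD mulrDl mul1r polyCD opprD addrA addrAC.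
Qed.

Lemma iter_sig_prod m n (F : 'I_n -> {poly k}) :
  iter m sig (\prod_(i < n) F i) = \prod_(i < n) iter m sig (F i).
Proof. by elim: m => [|m IH] //=; rewrite IH sig_prod. Qed.

Lemma iter_sig_sigi n q : iter n sig (iter n sigi q) = q.
Proof. by elim: n q => [|n IH] q //; rewrite iterSr iterS sigKi IH. Qed.

Variable r : nat.
Hypothesis rnz : (r%:R : k) != 0.
Definition Xr : {poly k} := (r%:R)^-1 *: 'X.
Definition rX : {poly k} := r%:R *: 'X.

Lemma compK1 p : (p \Po rX) \Po Xr = p.
Proof.
by rewrite -comp_polyA /rX comp_polyZ comp_polyX /Xr scalerA mulfV // scale1r comp_polyXr.
Qed.
Lemma compK2 p : (p \Po Xr) \Po rX = p.
Proof.
by rewrite -comp_polyA /Xr comp_polyZ comp_polyX /rX scalerA mulVf // scale1r comp_polyXr.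
Qed.

Lemma comp_r_sig q : (sig q) \Po Xr = iter r sig (q \Po Xr).
Proof.
rewrite iter_sig /shift_sigma -!comp_polyA; congr (q \Po _).
rewrite comp_polyB comp_polyX comp_polyC /Xr comp_polyZ comp_polyX scalerBr.
congr (_ - _); by rewrite -mul_polyC -polyCM mulrA mulVf // mul1r.
Qed.

Definition Pn (a : {poly k}) n := \prod_(i < n) iter i sigi a.
Definition Qn (a : {poly k}) n := \prod_(i < n) iter i.+1 sig a.

Lemma a_tilde_Xr a : a_tilde h0 r a \Po Xr = Pn a r.
Proof. rewrite /a_tilde comp_prod; apply: eq_bigr => i _; exact: compK1. Qed.

Lemma PnS a n : Pn a n.+1 = a * sigi (Pn a n).
Proof.
rewrite /Pn big_ord_recl /=; congr (_ * _).
rewrite /shift_sigma_inv comp_prod; apply: eq_bigr => i _ /=.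
by [] || (rewrite iterS; by []).
Qed.

Lemma QnS a n : Qn a n.+1 = sig a * sig (Qn a n).
Proof.
rewrite /Qn big_ord_recl /= sig_prod; congr (_ * _).
Qed.

Lemma iter_Pn a : iter r sig (Pn a r) = Qn a r.
Proof.
rewrite /Pn iter_sig_prod /Qn (reindex_inj rev_ord_inj) /=.
apply: eq_bigr => i _ /=.
have E : iter r sig (iter (r - i.+1) sigi a) =
  iter i.+1 sig (iter (r - i.+1) sig (iter (r - i.+1) sigi a)) by rewrite -iterD subnKC.
by rewrite E iter_sig_sigi.
Qed.
End PolyFacts.

Section GWA2.
Variables (k : fieldType) (h0 : k) (a : {poly k}).
Local Notation sig := (shift_sigma h0).
Local Notation sigi := (shift_sigma_inv h0).
Variables (A : algType k) (iota : {poly k} -> A) (x y : A).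
Hypothesis Hrel : gwa_rel a sig iota x y.

Lemma ynxn n : y ^+ n * x ^+ n = iota (Pn h0 a n).
Proof.
elim: n => [|n IH]; first by rewrite !expr0 mulr1 /Pn big_ord0 (hom1 (ihom Hrel)).
rewrite exprS exprSr -mulrA (mulrA (y ^+ n)) IH (rx_rel Hrel) mulrA (yx_rel Hrel).
by rewrite -(homM (ihom Hrel)) PnS.
Qed.

Lemma xnyn n : x ^+ n * y ^+ n = iota (Qn h0 a n).
Proof.
elim: n => [|n IH]; first by rewrite !expr0 mulr1 /Qn big_ord0 (hom1 (ihom Hrel)).
rewrite exprS exprSr -mulrA (mulrA (x ^+ n)) IH mulrA (xr_rel Hrel) -mulrA (xy_rel Hrel).
by rewrite -(homM (ihom Hrel)) QnS mulrC.
Qed.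
End GWA2.

Lemma poly_hom_eq (k : fieldType) (A : algType k) (g1 g2 : {poly k} -> A) :
  is_kalg_hom g1 -> is_kalg_hom g2 -> g1 'X = g2 'X -> forall p, g1 p = g2 p.
Proof.
move=> h1 h2 eX p; rewrite -(coefK p) poly_def (hom_sum h1) (hom_sum h2).
apply: eq_bigr => i _; by rewrite (homZ h1) (homZ h2) (homX h1) (homX h2) eX.
Qed.

Lemma sum_pow1 (k : fieldType) (r : nat) (c : k) : c ^+ r = 1 ->
  \sum_(i < r) c ^+ i = if c == 1 then r%:R else 0.
Proof.
move=> cr; case: eqP => [->|/eqP ne].
  by rewrite (eq_bigr (fun _ => 1)) => [|i _]; rewrite ?expr1n // sumr_const card_ord.
have := subrX1 c r; rewrite cr subrr => /esym/eqP; rewrite mulf_eq0 subr_eq0 (negbTE ne) /=.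
by move/eqP.
Qed.

Lemma sum_delta (V : zmodType) M j (F : nat -> V) : (j < M)%N ->
  \sum_(n < M) (if (n : nat) == j then F n else 0) = F j.
Proof. by move=> jM; rewrite -big_mkcond big_ord1_eq jM. Qed.

Section Phi.
Variables (k : fieldType) (h0 : k) (a : {poly k}) (r : nat).
Hypothesis rnz : (r%:R : k) != 0.
Local Notation sig := (shift_sigma h0).
Variables (A : algType k) (iota : {poly k} -> A) (x y : A).
Hypothesis Hrel : gwa_rel a sig iota x y.

Lemma phi_rel : gwa_rel (a_tilde h0 r a) sig (fun p => iota (p \Po Xr k r)) (x ^+ r) (y ^+ r).
Proof.
have ih := ihom Hrel.
split.
- split => [u v|c u|u v|].
  + by rewrite comp_polyD (homD ih).
  + by rewrite comp_polyZ (homZ ih).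
  + by rewrite comp_polyM (homM ih).
  + by rewrite -polyC1 comp_polyC polyC1 (hom1 ih).
- by rewrite (ynxn Hrel) (a_tilde_Xr h0 rnz).
- by rewrite (xnyn Hrel) (comp_r_sig h0 rnz) (a_tilde_Xr h0 rnz) iter_Pn.
- by move=> p; rewrite (xnr_rel Hrel) (comp_r_sig h0 rnz).
- by move=> p; rewrite (rynr_rel Hrel) (comp_r_sig h0 rnz).
Qed.
End Phi.

Section NF.
Variables (k : fieldType) (B : algType k) (iotaB : {poly k} -> B) (X Y : B).
Hypothesis ih : is_kalg_hom iotaB.

Definition nterm (p q : nat -> {poly k}) (n : nat) : B :=
  iotaB (p n) * X ^+ n + iotaB (q n) * Y ^+ n.+1.

Lemma NF_exists b : Sp iotaB X Y b -> exists N p q,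
  forall M, (N <= M)%N -> b = \sum_(n < M) nterm p q n.
Proof.
elim => [|z p0 j _ [N [p [q IH]]]|z p0 j _ [N [p [q IH]]]].
- exists 0%N, (fun _ => 0), (fun _ => 0) => M _.
  by rewrite big1 // => n _; rewrite /nterm (hom0 ih) !mul0r addr0.
- exists (maxn N j.+1), (fun n => p n + (if n == j then p0 else 0)), q => M.
  rewrite geq_max => /andP [NM jM].
  rewrite (IH M NM) -(sum_delta (fun n => iotaB p0 * X ^+ n) jM) -big_split /=.
  apply: eq_bigr => n _; rewrite /nterm /=.
  by case: eqP => _; rewrite ?addr0 ?(hom0 ih) ?mul0r ?addr0 // (homD ih) mulrDl addrAC.
- case: j => [|j].
  + exists (maxn N 1), (fun n => p n + (if n == 0%N then p0 else 0)), q => M.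
    rewrite geq_max => /andP [NM jM].
    rewrite (IH M NM) expr0 -(expr0 X) -(sum_delta (fun n => iotaB p0 * X ^+ n) jM) -big_split /=.
    apply: eq_bigr => n _; rewrite /nterm /=.
    by case: eqP => _; rewrite ?addr0 ?(hom0 ih) ?mul0r ?addr0 // (homD ih) mulrDl addrAC.
  + exists (maxn N j.+1), p, (fun n => q n + (if n == j then p0 else 0)) => M.
    rewrite geq_max => /andP [NM jM].
    rewrite (IH M NM) -(sum_delta (fun n => iotaB p0 * Y ^+ n.+1) jM) -big_split /=.
    apply: eq_bigr => n _; rewrite /nterm /=.
    by case: eqP => _; rewrite ?addr0 ?(hom0 ih) ?mul0r ?addr0 // (homD ih) mulrDl addrA.
Qed.
End NF.

Unset Implicit Arguments. Set Strict Implicit. Set Printing Implicit Defensive.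

Theorem lemma4p1 (k : fieldType) (char0 : [pchar k] =i pred0)
  (a : {poly k}) (a_nonconst : (1 < size a)%N)
  (h0 : k) (h0_nz : h0 != 0)
  (r : nat) (r_pos : (0 < r)%N) (w : k) (w_prim : r.-primitive_root w)
  (A : algType k) (iota : {poly k} -> A) (x y : A)
  (A_gwa : is_GWA a (shift_sigma h0) iota x y)
  (theta : A -> A)
  (theta_hom : is_kalg_hom theta)
  (theta_x : theta x = w *: x) (theta_y : theta y = w^-1 *: y)
  (theta_h : theta (iota 'X) = iota 'X)
  (B : algType k) (iotaB : {poly k} -> B) (X Y : B)
  (B_gwa : is_GWA (a_tilde h0 r a) (shift_sigma h0) iotaB X Y) :
  exists phi : B -> A,
    [/\ is_kalg_hom phi, injective phi
      & forall z : A, (forall i : 'I_r, iter i theta z = z) <-> exists b, phi b = z].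
Proof.
have rnz : (r%:R : k) != 0 by rewrite ((pcharf0P k).1 char0 r) -lt0n.
have Arel := A_gwa.1.
have iA := ihom Arel.
have [[phi [phih phii phix phiy]] _] := B_gwa.2 A _ _ _ (phi_rel rnz Arel).
have [[psi [psih psii psix psiy]] _] := A_gwa.2 _ _ _ _ (model_rel h0 a).
have thi : forall p, theta (iota p) = iota p.
  exact: (poly_hom_eq (hom_comp iA theta_hom) iA theta_h).
exists phi; split => //.
- move=> b1 b2 E; apply/eqP; rewrite -subr_eq0; apply/eqP.
  have Z : phi (b1 - b2) = 0 by rewrite (homB phih) E subrr.
  move: Z; set b := b1 - b2; move=> Z.
  have [N [p [q NF]]] := NF_exists (ihom B_gwa.1) (span_all B_gwa b).
  have bE := NF N (leqnn N).
  have aNZ : a != 0 by apply: contraTneq a_nonconst => ->; rewrite size_poly0.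
  have ev : forall m : int, \sum_(n < N) ((p n \Po Xr k r) * (if m == (r * n)%N%:Z then 1 else 0)
     + (q n \Po Xr k r) * (if m == - (r * n.+1)%N%:Z then cY h0 a (r * n.+1) else 0)) = 0.
    move=> m.
    have := congr1 (fun z => app (psi z) (v0 k) m) Z.
    rewrite /= (hom0 psih) app0 bE (hom_sum phih) (hom_sum psih) app_sum => H; apply: (etrans _ H).
    apply: eq_bigr => n _; rewrite /nterm (homD phih) (homD psih) appD !(homM phih) !(homM psih) !appM.
    rewrite !phii (homX phih) (homX phih) phix phiy -!exprM !(homX psih) psix psiy !psii Xo_pow Yo_pow /=.
    done.
  have pz : forall j, (j < N)%N -> p j = 0.
    move=> j jN; have := ev (r * j)%N%:Z.
    rewrite (eq_bigr (fun n : 'I_N => if (n : nat) == j then p n \Po Xr k r else 0)).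
      by rewrite (sum_delta (fun n => p n \Po Xr k r) jN) => /(congr1 (fun u => u \Po rX k r)); rewrite compK2 // comp_poly0.
    move=> n _.
    have -> : ((r * j)%N%:Z == - (r * n.+1)%N%:Z) = false by apply/negbTE/eqP; nia.
    rewrite eqz_nat eqn_pmul2l // eq_sym.
    by case: eqP => _; rewrite ?mulr1 ?mulr0 ?addr0.
  have qz : forall j, (j < N)%N -> q j = 0.
    move=> j jN; have := ev (- (r * j.+1)%N%:Z).
    rewrite (eq_bigr (fun n : 'I_N => if (n : nat) == j then (q n \Po Xr k r) * cY h0 a (r * n.+1) else 0)).
      rewrite (sum_delta (fun n => (q n \Po Xr k r) * cY h0 a (r * n.+1)) jN) => /eqP; rewrite mulf_eq0 (negbTE (cY_neq0 _ _ aNZ)) orbF => /eqP.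
      by move=> /(congr1 (fun u => u \Po rX k r)); rewrite compK2 // comp_poly0.
    move=> n _.
    have -> : (- (r * j.+1)%N%:Z == (r * n)%N%:Z) = false by apply/negbTE/eqP; nia.
    rewrite eqr_opp eqz_nat eqn_pmul2l // eqSS eq_sym.
    by case: eqP => _; rewrite ?mulr1 ?mulr0 ?addr0 ?add0r.
  rewrite bE big1 // => n _; rewrite /nterm pz // qz // (hom0 (ihom B_gwa.1)) !mul0r addr0.
  done.
- move=> z; split.
  + move=> Hz.
    pose avg := fun u => (r%:R)^-1 *: \sum_(i < r) iter i theta u.
    have ith : forall i, is_kalg_hom (iter i theta).
      elim => [|i IH]; [exact: hom_id | exact: hom_comp IH theta_hom].
    have avgz : avg z = z.
      rewrite /avg (eq_bigr (fun _ => z)) => [|i _]; last exact: Hz.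
      by rewrite sumr_const card_ord -scaler_nat scalerA mulVf // scale1r.
    have mon : forall (m : A) (c : k), c ^+ r = 1 -> (forall i, iter i theta m = c ^+ i *: m) ->
        avg m = if c == 1 then m else 0.
      move=> m c cr Hi; rewrite /avg (eq_bigr (fun i : 'I_r => c ^+ i *: m)) => [|i _]; last exact: Hi.
      rewrite -scaler_suml sum_pow1 // scalerA.
      by case: eqP => _; rewrite ?mulVf ?scale1r ?mulr0 ?scale0r.
    have ix : forall i, iter i theta x = w ^+ i *: x.
      elim => [|i IH]; first by rewrite expr0 scale1r.
      by rewrite iterS IH (homZ theta_hom) theta_x scalerA -exprSr.
    have iy : forall i, iter i theta y = w^-1 ^+ i *: y.
      elim => [|i IH]; first by rewrite expr0 scale1r.
      by rewrite iterS IH (homZ theta_hom) theta_y scalerA -exprSr.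
    have iio : forall i p, iter i theta (iota p) = iota p.
      by elim => [|i IH] p //; rewrite iterS IH thi.
    have wr : w ^+ r = 1 := prim_expr_order w_prim.
    have imX : forall p n, exists b, phi b = avg (iota p * x ^+ n).
      move=> p n; rewrite (mon _ (w ^+ n)).
      * case: ifP => [/eqP w1|_]; last by exists 0; rewrite (hom0 phih).
        have dv : (r %| n)%N by rewrite (prim_order_dvd w_prim) w1.
        exists (iotaB (p \Po rX k r) * X ^+ (n %/ r)).
        by rewrite (homM phih) phii compK1 // (homX phih) phix -exprM (mulnC r) divnK.
      * by rewrite exprAC wr expr1n.
      * move=> i; rewrite (homM (ith i)) iio (homX (ith i)) ix exprZn -scalerAr exprAC.
        done.
    have imY : forall p n, exists b, phi b = avg (iota p * y ^+ n).
      move=> p n; rewrite (mon _ (w^-1 ^+ n)).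
      * case: ifP => [/eqP w1|_]; last by exists 0; rewrite (hom0 phih).
        have dv : (r %| n)%N.
          by rewrite (prim_order_dvd w_prim) -invr_eq1 -exprVn w1.
        exists (iotaB (p \Po rX k r) * Y ^+ (n %/ r)).
        by rewrite (homM phih) phii compK1 // (homX phih) phiy -exprM (mulnC r) divnK.
      * by rewrite exprAC exprVn wr invr1 expr1n.
      * move=> i; rewrite (homM (ith i)) iio (homX (ith i)) iy exprZn -scalerAr exprAC.
        done.
    have all : forall u, Sp iota x y u -> exists b, phi b = avg u.
      move=> u0; elim => [|u p n _ [b1 E1]|u p n _ [b1 E1]].
      * exists 0; rewrite (hom0 phih) /avg big1 ?scaler0 // => i _; exact: hom0 (ith i).
      * have [b2 E2] := imX p n; exists (b1 + b2).
        rewrite (homD phih) E1 E2 /avg -scalerDr -big_split /=; congr (_ *: _).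
        by apply: eq_bigr => i _; rewrite (homD (ith i)).
      * have [b2 E2] := imY p n; exists (b1 + b2).
        rewrite (homD phih) E1 E2 /avg -scalerDr -big_split /=; congr (_ *: _).
        by apply: eq_bigr => i _; rewrite (homD (ith i)).
    have [b Eb] := all z (span_all A_gwa z).
    by exists b; rewrite Eb avgz.
  + move=> [b <-] i.
    have [_ U] := B_gwa.2 A _ _ _ (phi_rel rnz Arel).
    have Tphi : forall b, theta (phi b) = phi b.
      move=> b'; apply: (U (theta \o phi) phi).
      * exact: hom_comp phih theta_hom.
      * by move=> p /=; rewrite phii thi.
      * by rewrite /= phix (homX theta_hom) theta_x exprZn (prim_expr_order w_prim) scale1r.
      * by rewrite /= phiy (homX theta_hom) theta_y exprZn exprVn (prim_expr_order w_prim) invr1 scale1r.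
      * exact: phih.
      * exact: phii.
      * exact: phix.
      * exact: phiy.
    by elim: (nat_of_ord i) => [|n IH] //=; rewrite IH Tphi.
Qed.
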